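(* Let $(\mathbb S,+,\cdot)$ be an Essential S-Structure. Then $(\mathbb S_0,+,\cdot)$ (with the operations of $\mathbb S$ restricted to $\mathbb S_0$) forms a Commutative Ring with Unity $1$.
   Context: An S-Structure is a triple $(\mathbb S,+,\cdot)$ where $\mathbb S$ is a set and $+,\cdot$ are binary operations on $\mathbb S$ such that: $(\mathbb S,+)$ is a commutative group with identity $0$ (the inverse of $s$ is written $-s$, and $s-t:=s+(-t)$); $\mathbb S$ is closed under $\cdot$; and there exists $s\in\mathbb S$ with $0\cdot s\neq 0$ or $s\cdot 0\neq 0$. Multiplication binds tighter than addition. The structures considered come with a distinguished element of $\mathbb S$ denoted $1$. It is Commutative if $s\cdot t=t\cdot s$ for all $s,t$. For a Commutative S-Structure and $\alpha\in\mathbb S$, put $\mathbb S_\alpha=\{s\in\mathbb S:0\cdot s=s\cdot 0=\alpha\}$ and $\Lambda=\{\alpha\in\mathbb S:\mathbb S_\alpha\neq\emptyset\}$. Wheel Distributive: $s\cdot(t+r)+(s\cdot 0)=(s\cdot t)+(s\cdot r)$ for all $s,t,r\in\mathbb S$. S-Associative: for all $m,n\in\mathbb S_0$ and $s\in\mathbb S$, $m\cdot(n\cdot s)=(m\cdot n)\cdot s-([(m-1)\cdot(n-1)]\cdot(0\cdot s))$. Base: if $\mathbb S_0\neq\emptyset$ and $\alpha\in\Lambda$, $q\in\mathbb S_\alpha$ is a Base for $\mathbb S_\alpha$ if $q+\beta\in\mathbb S_\alpha$ for all $\beta\in\mathbb S_0$ and every $s\in\mathbb S_\alpha$ equals $q+\beta$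 for some $\beta\in\mathbb S_0$. Coordinated: $\mathbb S_0\neq\emptyset$ and every $\mathbb S_\alpha$ with $\alpha\in\Lambda$ has a Base. Standard Bases: a Coordinated Commutative S-Structure has Standard Bases if there is a specified element $q_0(1)\in\mathbb S_1$ which is a Base for $\mathbb S_1$, and for every $\alpha\in\Lambda$ the element $q_0(\alpha):=\alpha\cdot(q_0(1)+1)-1$ lies in $\mathbb S_\alpha$ and is a Base for $\mathbb S_\alpha$. An Essential S-Structure is an S-Structure that is Commutative, Wheel Distributive, S-Associative, has Standard Bases (in particular is Coordinated), satisfies $0,1\in\mathbb S_0$, and satisfies $\mathbb S_0=\{1\cdot x:x\in\mathbb S_0\}$. *)

(* Defs.v *)
From mathcomp Require Import all_boot all_algebra.
Set Implicit Arguments. Unset Strict Implicit. Unset Printing Implicit Defensive.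
Import GRing.Theory.
Local Open Scope ring_scope.

Section SStructure.
Variables (S : zmodType) (mul : S -> S -> S) (one : S).

(* S-Structure: (S,+) commutative group (zmodType), S closed under mul
   (by typing), and some s with 0*s <> 0 or s*0 <> 0. *)
Definition SStructure : Prop :=
  exists s : S, mul 0 s <> 0 \/ mul s 0 <> 0.

Definition Commutative : Prop := forall s t : S, mul s t = mul t s.

Definition S_ (alpha s : S) : Prop := mul 0 s = alpha /\ mul s 0 = alpha.

Definition Lambda (alpha : S) : Prop := exists s, S_ alpha s.

Definition WheelDistributive : Prop :=
  forall s t r : S, mul s (t + r) + mul s 0 = mul s t + mul s r.

Definition SAssociative : Prop :=
  forall m n s : S, S_ 0 m -> S_ 0 n ->
    mul m (mul n s) = mul (mul m n) s - mul (mul (m - one) (n - one)) (mul 0 s).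

Definition Base (alpha q : S) : Prop :=
  S_ alpha q /\
  (forall beta, S_ 0 beta -> S_ alpha (q + beta)) /\
  (forall s, S_ alpha s -> exists beta, S_ 0 beta /\ s = q + beta).

Definition Coordinated : Prop :=
  (exists x, S_ 0 x) /\ forall alpha, Lambda alpha -> exists q, Base alpha q.

Definition q0 (q01 alpha : S) : S := mul alpha (q01 + one) - one.

Definition StandardBases : Prop :=
  Coordinated /\
  exists q01 : S, S_ one q01 /\ Base one q01 /\
    forall alpha, Lambda alpha -> S_ alpha (q0 q01 alpha) /\ Base alpha (q0 q01 alpha).

Definition Essential : Prop :=
  SStructure /\ Commutative /\ WheelDistributive /\ SAssociative /\
  StandardBases /\ S_ 0 0 /\ S_ 0 one /\
  (forall x, S_ 0 x <-> exists y, S_ 0 y /\ x = mul one y).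

Definition ComRingWithUnityOn (P : S -> Prop) : Prop :=
  (P 0 /\ P one /\
      (forall x y, P x -> P y -> P (x + y)) /\
      (forall x, P x -> P (- x)) /\
      (forall x y, P x -> P y -> P (mul x y))) /\
      ((forall x y z, P x -> P y -> P z -> x + (y + z) = (x + y) + z) /\
      (forall x y, P x -> P y -> x + y = y + x) /\
      (forall x, P x -> x + 0 = x) /\
      (forall x, P x -> x + - x = 0)) /\
      (forall x y z, P x -> P y -> P z -> mul x (mul y z) = mul (mul x y) z) /\
      (forall x y, P x -> P y -> mul x y = mul y x) /\
      (forall x, P x -> mul one x = x /\ mul x one = x) /\
      (forall x y z, P x -> P y -> P z -> mul x (y + z) = mul x y + mul x z) /\
      (forall x y z, P x -> P y -> P z -> mul (x + y) z = mul x z + mul y z).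

End SStructure.

(* Main.v *)
Require Import Defs.
From mathcomp Require Import all_boot all_algebra.
Import GRing.Theory.
Local Open Scope ring_scope.

Theorem theorem3p1p1 (S : zmodType) (mul : S -> S -> S) (one : S) :
  Essential mul one -> ComRingWithUnityOn mul one (S_ mul 0).
Proof.
move=> [_ [comm [wd [sa [[_ [q01 [[Hq01 _] _]]] [[H00 _] [[H0o Ho0] Hlast]]]]]]].
have PE : forall x, S_ mul 0 x <-> mul 0 x = 0.
  move=> x; split; first by case.
  by move=> h; split => //; rewrite comm.
have Ladd : forall x y z, S_ mul 0 x -> mul x (y + z) = mul x y + mul x z.
  move=> x y z [_ hx]; by rewrite -wd hx addr0.
have Lneg : forall x y, S_ mul 0 x -> mul x (- y) = - mul x y.
  move=> x y hx; have h := Ladd x y (- y) hx; rewrite subrr (proj2 hx) in h.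
  by apply/eqP; rewrite -subr_eq0 opprK addrC -h.
have P0 : S_ mul 0 0 by split.
have Po : S_ mul 0 one by split.
have Padd : forall x y, S_ mul 0 x -> S_ mul 0 y -> S_ mul 0 (x + y).
  move=> x y /PE hx /PE hy; apply/PE; by rewrite Ladd // hx hy addr0.
have Pneg : forall x, S_ mul 0 x -> S_ mul 0 (- x).
  move=> x /PE hx; apply/PE; by rewrite Lneg // hx oppr0.
have Psub : forall x y, S_ mul 0 x -> S_ mul 0 y -> S_ mul 0 (x - y).
  by move=> x y hx hy; apply: Padd => //; apply: Pneg.
have Pmul : forall x y, S_ mul 0 x -> S_ mul 0 y -> S_ mul 0 (mul x y).
  move=> x y hx hy.
  have E : forall w, S_ mul 0 w ->
      mul 0 (mul x w) = - mul (mul (0 - one) (x - one)) 0.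
    move=> w /PE hw; rewrite (sa _ _ _ P0 hx).
    by rewrite ((PE x).1 hx) hw add0r.
  have := E 0 P0; rewrite (proj2 hx) H00 => h0.
  apply/PE; by rewrite E // -h0.
have Hmo : forall m, S_ mul 0 m -> mul m one = mul (mul m one) one.
  move=> m hm.
  have E1 := sa m 0 q01 hm P0.
  have E2 := sa 0 0 q01 P0 P0.
  rewrite (proj2 hm) Hq01 in E1; rewrite H00 Hq01 H0o in E2.
  have e2 : one = mul (mul (0 - one) (0 - one)) one.
    by apply/eqP; rewrite -subr_eq0 -E2.
  have Pm1 : S_ mul 0 (0 - one) by apply: Psub.
  have Pmo : S_ mul 0 (m - one) by apply: Psub.
  have K : mul m one = mul one (mul (0 - one) (0 - one) - mul (m - one) (0 - one)).
    rewrite {1}E1 {1}e2 [mul (mul (0 - one) _) one]comm [mul (mul (m - one) _) one]comm.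
    by rewrite -Lneg // -Ladd.
  have I : mul (0 - one) (0 - one) - mul (m - one) (0 - one) = mul m one.
    rewrite [mul (m - one) _]comm -Lneg // -Ladd // opprB addrA subrK sub0r.
    by rewrite sub0r (Lneg _ _ (Pneg _ Po)) (comm (- one) m) Lneg // opprK.
  by rewrite {1}K I comm.
split.
  do 4!(split => //).
split.
  split; first by move=> *; rewrite addrA.
  split; first by move=> *; rewrite addrC.
  split; first by move=> *; rewrite addr0.
  by move=> *; rewrite subrr.
split.
  move=> x y z hx hy hz; rewrite sa // (proj1 hz).
  by rewrite (proj2 (Pmul _ _ (Psub _ _ hx Po) (Psub _ _ hy Po))) subr0.
split; first by move=> *; rewrite comm.
split.
  move=> x hx; have [y [hy ->]] := (Hlast x).1 hx.
  have e : mul one y = mul one (mul one y).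
    by rewrite !(comm one y) (comm one (mul y one)) -Hmo.
  by rewrite -e (comm (mul one y) one) -e.
split; first by move=> x y z hx _ _; rewrite Ladd.
by move=> x y z _ _ hz; rewrite (comm (x + y) z) Ladd // (comm z x) (comm z y).
Qed.
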